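(* Let $K,T\subset\mathbb{R}^n$ be convex bodies and let $q=(q_1,\dots,q_m)$ be a closed $(K,T)$-Minkowski billiard trajectory with closed dual billiard trajectory $p=(p_1,\dots,p_m)$. Then $\{q_1,\dots,q_m\}\in F(K)$ and $\{p_1,\dots,p_m\}\in F(T)$.
   Context: A convex body is a compact convex set in $\mathbb{R}^n$ containing the origin in its interior. For a convex body $K$, $F(K)$ denotes the set of subsets of $\mathbb{R}^n$ which cannot be translated into the interior $\mathring K$ of $K$ (i.e., $A\in F(K)$ iff $A+x\not\subseteq\mathring K$ for all $x\in\mathbb{R}^n$). For a convex set $C$ and $z\in\partial C$, $N_C(z)=\{v:\langle v,y-z\rangle\le 0\ \forall y\in C\}$. A closed polygonal curve $(q_1,\dots,q_m)$, $m\ge2$, always satisfies $q_j\ne q_{j+1}$ and $q_j\notin[q_{j-1},q_{j+1}]$ (indices mod $m$). A closed polygonal curve $q$ with vertices on $\partial K$ is a closed $(K,T)$-Minkowski billiard trajectory if there are $p_1,\dots,p_m\in\partial T$ with $q_{j+1}-q_j\in N_T(p_j)$ and $p_{j+1}-p_j\in -N_K(q_{j+1})$ for all $j$; $p=(p_1,\dots,p_m)$ is a closed dual billiard trajectory in $T$. *)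

(* Defs.v *)
From mathcomp Require Import all_boot all_order all_algebra.
From mathcomp Require Import all_classical all_reals all_analysis.
Import Order.TTheory GRing.Theory Num.Theory.
Import numFieldNormedType.Exports.
Local Open Scope classical_set_scope.
Local Open Scope ring_scope.

Section Defs.
Context {R : realType} {n : nat}.
Notation V := 'rV[R]_n.

Definition dotp (u v : V) : R := \sum_(i < n) u ord0 i * v ord0 i.

Definition convex_body (K : set V) : Prop :=
  [/\ compact K, convex_set (K : set (convex_lmodType V)) & interior K 0].

Definition bd (C : set V) : set V := closure C `\` interior C.

Definition Fset (K : set V) : set (set V) :=
  [set A | forall x : V, ~ ([set a + x | a in A] `<=` interior K)].

Definition normal_cone (C : set V) (z : V) : set V :=
  [set v | forall y, C y -> dotp v (y - z) <= 0].

Definition segment (a b : V) : set V :=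
  [set (1 - t) *: a + t *: b | t in `[0, 1]%classic].

Definition closed_polygonal_curve {m : nat} (q : 'I_m -> V) : Prop :=
  (2 <= m)%N /\
  forall j : 'I_m, q j <> q (ordS j) /\ ~ segment (q (ord_pred j)) (q (ordS j)) (q j).

Definition minkowski_billiard (K T : set V) {m : nat} (q p : 'I_m -> V) : Prop :=
  [/\ closed_polygonal_curve q,
      forall j, bd K (q j),
      forall j, bd T (p j),
      forall j, normal_cone T (p j) (q (ordS j) - q j)
    & forall j, normal_cone K (q (ordS j)) (- (p (ordS j) - p j))].

End Defs.

(* Main.v *)
Require Import Defs.
From mathcomp Require Import all_boot all_order all_algebra.
From mathcomp Require Import all_classical all_reals all_analysis.
From mathcomp Require Import ring lra.
Import Order.TTheory GRing.Theory Num.Theory.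
Import numFieldNormedType.Exports.
Local Open Scope classical_set_scope.
Local Open Scope ring_scope.

Section H.
Context {R : realType} {n : nat}.
Notation V := 'rV[R]_n.

Lemma dotpDr (u a b : V) : dotp u (a + b) = dotp u a + dotp u b.
Proof. by rewrite /dotp -big_split; apply: eq_bigr => i _; rewrite mxE mulrDr. Qed.

Lemma dotpNr (u a : V) : dotp u (- a) = - dotp u a.
Proof. by rewrite /dotp -sumrN; apply: eq_bigr => i _; rewrite mxE mulrN. Qed.

Lemma dotpBr (u a b : V) : dotp u (a - b) = dotp u a - dotp u b.
Proof. by rewrite dotpDr dotpNr. Qed.

Lemma dotpZr (u a : V) t : dotp u (t *: a) = t * dotp u a.
Proof. by rewrite /dotp mulr_sumr; apply: eq_bigr => i _; rewrite mxE mulrCA. Qed.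

Lemma dotpC (u a : V) : dotp u a = dotp a u.
Proof. by apply: eq_bigr => i _; rewrite mulrC. Qed.

Lemma dotpNl (u a : V) : dotp (- u) a = - dotp u a.
Proof. by rewrite dotpC dotpNr dotpC. Qed.

Lemma dotpBl (u a b : V) : dotp (a - b) u = dotp a u - dotp b u.
Proof. by rewrite dotpC dotpBr !(dotpC u). Qed.

Lemma dotp_gt0 (v : V) : v != 0 -> 0 < dotp v v.
Proof.
move=> v0.
have [i vi] : exists i, v ord0 i != 0.
  apply/not_existsP => /= H; move/eqP: v0; apply; apply/rowP => i.
  rewrite mxE; apply/eqP/negPn/negP => h; exact: (H i h).
rewrite /dotp (bigD1 i) //= ltr_pwDl //.
  by rewrite -expr2 exprn_even_gt0.
by apply: sumr_ge0 => j _; rewrite -expr2 sqr_ge0.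
Qed.

Lemma normal_cone_lt {C : set V} {z v y} :
  normal_cone C z v -> interior C y -> v != 0 -> dotp v (y - z) < 0.
Proof.
move=> Nv /nbhs_ex [d Hd] v0.
have nv : 0 < `|v| by rewrite normr_gt0.
set t := d%:num / (`|v| * 2).
have t0 : 0 < t by rewrite /t divr_gt0 // mulr_gt0.
have : C (y + t *: v).
  apply: Hd; rewrite mx_norm_ball /ball_ /= opprD addrA subrr add0r normrN normrZ.
  rewrite gtr0_norm //.
  have -> : t * `|v| = d%:num / 2 by rewrite /t; field; rewrite gt_eqF.
  have e0 : 0 < d%:num by [].
  move: e0; set e := d%:num; lra.
move/Nv.
have -> : y + t *: v - z = (y - z) + t *: v :> V by rewrite addrAC.
rewrite dotpDr dotpZr => H.
have hv := @dotp_gt0 v v0.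
have : 0 < t * dotp v v by rewrite mulr_gt0.
move: H; set a := dotp v (y - z); set b := t * dotp v v; lra.
Qed.

Lemma sum_lt0_one {m} {f : 'I_m -> R} {j0} :
  f j0 < 0 -> (forall j, f j <= 0) -> \sum_(j < m) f j < 0.
Proof.
move=> h0 h; rewrite (bigD1 j0) //=.
have : \sum_(j < m | j != j0) f j <= 0 by apply: sumr_le0 => j _.
move: h0; set a := f j0; set b := \sum_(_ < _ | _) _; lra.
Qed.

Lemma telescope_ord {m} (g : 'I_m -> R) : \sum_(j < m) (g (ordS j) - g j) = 0.
Proof. by rewrite sumrB [X in _ - X](reindex_inj (@ordS_inj m)) subrr. Qed.

End H.

Theorem proposition3p9 (R : realType) (n : nat) (K T : set 'rV[R]_n)
    (m : nat) (q p : 'I_m -> 'rV[R]_n) :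
  convex_body K -> convex_body T -> minkowski_billiard K T q p ->
  Fset K (range q) /\ Fset T (range p).
Proof.
move=> [_ _ K0] [_ _ T0] [[m2 cq] bK bT NT NK].
have m0 : (0 < m)%N by apply: leq_trans m2.
pose j0 : 'I_m := Ordinal m0.
have qne : forall j, q (ordS j) - q j != 0.
  by move=> j; rewrite subr_eq0; apply/eqP => E; case: (cq j) => + _; apply.
have Tpart : forall (x : 'rV[R]_n), (forall j, interior T (p j + x)) ->
    (forall j, dotp (q (ordS j) - q j) x < 0).
  move=> x Hx j; have := normal_cone_lt (NT j) (Hx j) (qne j).
  by rewrite addrAC subrr add0r.
split.
- move=> x Hsub.
  have Hx : forall j, interior K (q j + x).
    by move=> j; apply: Hsub; exists (q j) => //; exists j.
  have Kx : forall j, K (q j + x) by move=> j; exact: interior_subset (Hx j).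
  have sum0 : \sum_(j < m) dotp (- (p (ordS j) - p j)) x = 0.
    under eq_bigr => j _ do rewrite dotpNl dotpBl.
    by rewrite sumrN telescope_ord oppr0.
  have le0 : forall j, dotp (- (p (ordS j) - p j)) x <= 0.
    move=> j; have := NK j _ (Kx (ordS j)).
    by rewrite addrAC subrr add0r.
  case: (pselect (exists j, - (p (ordS j) - p j) != 0)) => [[j1 hj1]|hno].
  + have : dotp (- (p (ordS j1) - p j1)) x < 0.
      have := normal_cone_lt (NK j1) (Hx (ordS j1)) hj1.
      by rewrite addrAC subrr add0r.
    move/(sum_lt0_one)/(_ le0); rewrite sum0 ltxx //.
  + have pe : forall j, p (ordS j) = p j.
      move=> j; apply/eqP; rewrite -subr_eq0 -oppr_eq0.
      by apply/negPn/negP => h; apply: hno; exists j.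
    have hlt : forall j, dotp (q (ordS j) - q j) (0 - p j) < 0.
      by move=> j; exact: normal_cone_lt (NT j) T0 (qne j).
    have := sum_lt0_one (hlt j0) (fun j => ltW (hlt j)).
    under eq_bigr => j _ do rewrite sub0r dotpNr dotpBl {1}(esym (pe j)).
    by rewrite sumrN (telescope_ord (fun j => dotp (q j) (p j))) oppr0 ltxx.
- move=> x Hsub.
  have Hx : forall j, interior T (p j + x).
    by move=> j; apply: Hsub; exists (p j) => //; exists j.
  have hlt := Tpart x Hx.
  have := sum_lt0_one (hlt j0) (fun j => ltW (hlt j)).
  under eq_bigr => j _ do rewrite dotpBl.
  by rewrite telescope_ord ltxx.
Qed.
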